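(* Let $\varepsilon>0$, let $\Omega\subset\mathbb{R}$ be a bounded set with $\operatorname{diam}(\Omega)=D$, and let $\mathcal{X},\mathcal{Y}\subset\Omega$ be disjoint. For $n\ge 0$ and $t\in\mathbb{R}$ define $$\alpha_n(t)=\frac{2^n\varepsilon^{2n}e^{-\varepsilon^2t^2}t^n}{n!},\qquad \beta_n(t)=e^{-\varepsilon^2t^2}t^n .$$ Let $\delta>0$. If the integer $r\ge 0$ satisfies $$r>\max\Big\{\log_2\!\Big(\frac{e^{2\varepsilon^2D^2}}{\delta}\Big)-1,\; 12\varepsilon^2D^2-1\Big\},$$ then for every $\bar x\in\mathcal{X}$, every $x\in\mathcal{X}$ and every $y\in\mathcal{Y}$, $$\Big|e^{-\varepsilon^2(x-y)^2}-\sum_{n=0}^{r}\alpha_n(x-\bar x)\,\beta_n(y-\bar x)\Big|<\delta .$$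
   Context: Here $\operatorname{diam}(\Omega)=\sup_{u,v\in\Omega}|u-v|$. Note that $\sum_{n=0}^\infty\alpha_n(x-\bar x)\beta_n(y-\bar x)=e^{-\varepsilon^2(x-y)^2}$ (Taylor expansion of the exponential). *)

(* Defs.v *)
From Stdlib Require Import Reals Lra.
Open Scope R_scope.

Definition alpha (eps : R) (n : nat) (t : R) : R :=
  2 ^ n * eps ^ (2 * n) * exp (- eps ^ 2 * t ^ 2) * t ^ n / INR (Factorial.fact n).

Definition beta (eps : R) (n : nat) (t : R) : R :=
  exp (- eps ^ 2 * t ^ 2) * t ^ n.

Definition bounded_set (Om : R -> Prop) : Prop :=
  exists M : R, forall u, Om u -> Rabs u <= M.

Definition is_diam (Om : R -> Prop) (D : R) : Prop :=
  is_lub (fun d => exists u v, Om u /\ Om v /\ d = Rabs (u - v)) D.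

Definition log2 (z : R) : R := ln z / ln 2.

(* Main.v *)
Require Import Defs.
From Stdlib Require Import Reals Lra Lia.
From Coquelicot Require Import Coquelicot.
Open Scope R_scope.
Lemma Dn_exp s m t : Derive_n (fun u => exp (s*u)) m t = s^m * exp (s*t).
Proof.
  revert t; induction m as [|m IH]; intro t; simpl. ring.
  rewrite (Derive_ext _ (fun u => s^m * exp (s*u))) by exact IH.
  apply is_derive_unique. auto_derive; auto. ring.
Qed.
Lemma exDn_exp s k t : ex_derive_n (fun u => exp (s*u)) k t.
Proof.
  destruct k; simpl. exact I.
  apply (ex_derive_ext (fun u => s^k * exp (s*u))). intro; symmetry; apply Dn_exp.
  auto_derive; auto.
Qed.
Lemma taylor_exp (r : nat) (z : R) : exists xi, Rabs xi <= Rabs z /\ (0 <= z -> 0 <= xi) /\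
  exp z = sum_f_R0 (fun n => z^n / INR (Factorial.fact n)) r + z^(S r) / INR (Factorial.fact (S r)) * exp xi.
Proof.
  destruct (Rtotal_order z 0) as [Hz|[Hz|Hz]].
  - destruct (Taylor_Lagrange (fun u => exp (-1*u)) r 0 (-z)) as [xi [Hxi E]]. lra.
    intros; apply exDn_exp.
    exists (-1*xi). split. rewrite !Rabs_left; lra. split. lra.
    replace (exp z) with (exp (-1 * -z)) by (f_equal; ring). rewrite E.
    rewrite Dn_exp. f_equal.
    + apply sum_eq; intros i _. rewrite Dn_exp. rewrite Rmult_0_r, exp_0.
      replace (-z - 0) with (-1 * z) by ring. rewrite Rpow_mult_distr.
      replace ((-1)^i * z^i / INR (Factorial.fact i) * ((-1)^i * 1)) with (((-1)^i*(-1)^i) * (z^i / INR (Factorial.fact i))) by (unfold Rdiv; ring).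
      rewrite <- Rpow_mult_distr. replace (-1 * -1) with 1 by ring. rewrite pow1. ring.
    + replace (-z - 0) with (-1 * z) by ring. rewrite Rpow_mult_distr.
      replace ((-1)^S r * z^S r / INR (Factorial.fact (S r)) * ((-1)^S r * exp (-1*xi))) with (((-1)^S r*(-1)^S r) * (z^S r / INR (Factorial.fact (S r)) * exp (-1*xi))) by (unfold Rdiv; ring).
      rewrite <- Rpow_mult_distr. replace (-1 * -1) with 1 by ring. rewrite pow1. ring.
  - subst z. exists 0. split. lra. split. lra.
    rewrite pow_i by lia. rewrite exp_0.
    clear. induction r. simpl. field. rewrite tech5, IHr. rewrite pow_i by lia. unfold Rdiv; ring.
  - destruct (Taylor_Lagrange (fun u => exp (1*u)) r 0 z) as [xi [Hxi E]]. lra.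
    intros; apply exDn_exp.
    exists xi. split. rewrite !Rabs_right; lra. split. lra.
    replace (exp z) with (exp (1 * z)) by (f_equal; ring). rewrite E.
    rewrite Dn_exp. rewrite pow1. f_equal.
    + apply sum_eq; intros i _. rewrite Dn_exp, pow1, Rmult_0_r, exp_0, Rminus_0_r. ring.
    + rewrite Rminus_0_r. rewrite !Rmult_1_l. reflexivity.
Qed.

Lemma exp_ge_term (x : R) (N : nat) : 0 <= x -> x^N / INR (Factorial.fact N) <= exp x.
Proof.
  intro Hx. destruct N as [|r].
  - simpl. pose proof (exp_ineq1_le x). lra.
  - destruct (taylor_exp r x) as [xi [_ [Hxi E]]]. rewrite E.
    assert (0 <= sum_f_R0 (fun n => x^n / INR (Factorial.fact n)) r).
    { apply cond_pos_sum. intro n. apply Rdiv_le_0_compat. apply pow_le; lra. apply INR_fact_lt_0. }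
    assert (1 <= exp xi). { rewrite <- exp_0. destruct (Req_dec xi 0). subst; lra. left; apply exp_increasing; lra. }
    assert (0 <= x ^ S r / INR (Factorial.fact (S r))).
    { apply Rdiv_le_0_compat. apply pow_le; lra. apply INR_fact_lt_0. }
    nra.
Qed.

Lemma fact_bound (c : R) (N : nat) : 0 <= c -> 6 * c < INR N -> (2*c)^N / INR (Factorial.fact N) <= 1.
Proof.
  intros Hc HN.
  assert (HN0 : 0 < INR N) by lra.
  pose proof (exp_ge_term (INR N) N (Rlt_le _ _ HN0)) as H1.
  assert (He : exp (INR N) = (exp 1)^N).
  { rewrite <- Rpower_pow by apply exp_pos. unfold Rpower. rewrite ln_exp. f_equal; ring. }
  assert (Hf : 0 < INR (Factorial.fact N)) by apply INR_fact_lt_0.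
  assert (Hq : (2*c)^N = (2*c*exp 1 / INR N)^N * (INR N ^ N / exp (INR N))).
  { rewrite He. unfold Rdiv. rewrite ?Rpow_mult_distr, ?pow_inv. field. split. apply pow_nonzero. pose proof (exp_pos 1); lra. apply pow_nonzero; lra. }
  assert (Hb : (2*c*exp 1 / INR N)^N <= 1).
  { replace 1 with (1 ^ N) at 2 by apply pow1. apply pow_incr. pose proof exp_le_3. pose proof (exp_pos 1). split.
    apply Rdiv_le_0_compat; [apply Rmult_le_pos; lra | lra]. apply (Rmult_le_reg_r (INR N)); auto. replace (2 * c * exp 1 / INR N * INR N) with (2*c*exp 1) by (field; lra). nra. }
  assert (Hc2 : INR N ^ N / exp (INR N) <= INR (Factorial.fact N)).
  { pose proof (exp_pos (INR N)). apply (Rmult_le_reg_r (exp (INR N))); auto. unfold Rdiv; rewrite Rmult_assoc, Rinv_l by lra.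
    apply (Rmult_le_reg_r (/ INR (Factorial.fact N))). apply Rinv_0_lt_compat; auto.
    replace (INR (Factorial.fact N) * exp (INR N) * / INR (Factorial.fact N)) with (exp (INR N)) by (field; lra). lra. }
  rewrite Hq. apply (Rmult_le_reg_r (INR (Factorial.fact N))); auto. unfold Rdiv at 1. rewrite Rmult_assoc, Rinv_l by lra.
  assert (0 <= (2*c*exp 1 / INR N)^N). { apply pow_le. pose proof (exp_pos 1). apply Rdiv_le_0_compat; [apply Rmult_le_pos; lra | lra]. }
  assert (0 <= INR N ^ N / exp (INR N)). { apply Rdiv_le_0_compat. apply pow_le; lra. apply exp_pos. }
  nra.
Qed.

Theorem lemma1 (eps : R) (Om X Y : R -> Prop) (D delta : R) (r : nat)
  (heps : 0 < eps)
  (hbd : bounded_set Om) (hD : is_diam Om D)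
  (hX : forall u, X u -> Om u) (hY : forall u, Y u -> Om u)
  (hdisj : forall u, X u -> Y u -> False)
  (hdelta : 0 < delta)
  (hr : INR r > Rmax (log2 (exp (2 * eps ^ 2 * D ^ 2) / delta) - 1)
                     (12 * eps ^ 2 * D ^ 2 - 1)) :
  forall xb x y, X xb -> X x -> Y y ->
    Rabs (exp (- eps ^ 2 * (x - y) ^ 2)
          - sum_f_R0 (fun n => alpha eps n (x - xb) * beta eps n (y - xb)) r)
    < delta.
Proof.
  intros xb x y Hxb Hx Hy.
  set (a := x - xb). set (b := y - xb).
  destruct hD as [Hub _].
  assert (Ha : Rabs a <= D). { apply Hub. exists x, xb. auto. }
  assert (Hb : Rabs b <= D). { apply Hub. exists y, xb. auto. }
  pose proof (Rabs_pos a). pose proof (Rabs_pos b).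
  set (c := 2 * eps ^ 2 * D ^ 2).
  set (z := 2 * eps ^ 2 * a * b).
  assert (Hz : Rabs z <= c).
  { unfold z, c. rewrite !Rabs_mult. rewrite (Rabs_right 2) by lra.
    rewrite (Rabs_right (eps^2)) by (apply Rle_ge, pow_le; lra).
    assert (0 < eps^2) by (apply pow_lt; lra).
    assert (Rabs a * Rabs b <= D^2) by nra. nra. }
  set (K := exp (- eps ^ 2 * a ^ 2) * exp (- eps ^ 2 * b ^ 2)).
  assert (E1 : exp (- eps ^ 2 * (x - y) ^ 2) = K * exp z).
  { unfold K. rewrite <- !exp_plus. f_equal. unfold z, a, b. ring. }
  assert (E2 : sum_f_R0 (fun n => alpha eps n a * beta eps n b) r
               = K * sum_f_R0 (fun n => z^n / INR (Factorial.fact n)) r).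
  { transitivity (sum_f_R0 (fun n => z^n / INR (Factorial.fact n) * K) r).
    - apply sum_eq; intros i _. unfold alpha, beta, K, z. rewrite pow_mult.
      rewrite !Rpow_mult_distr. field. apply INR_fact_neq_0.
    - rewrite scal_sum. ring. }
  fold a b. rewrite E1, E2.
  destruct (taylor_exp r z) as [xi [Hxi [_ E]]].
  rewrite E.
  replace (K * (sum_f_R0 (fun n => z ^ n / INR (Factorial.fact n)) r +
      z ^ S r / INR (Factorial.fact (S r)) * exp xi) -
      K * sum_f_R0 (fun n => z ^ n / INR (Factorial.fact n)) r)
    with (K * exp xi * (z ^ S r / INR (Factorial.fact (S r)))) by ring.
  assert (HK : 0 < K <= 1).
  { unfold K. rewrite <- exp_plus. split. apply exp_pos. rewrite <- exp_0.
    assert (0 <= eps^2 * a^2) by (apply Rmult_le_pos; apply pow2_ge_0).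
    assert (0 <= eps^2 * b^2) by (apply Rmult_le_pos; apply pow2_ge_0).
    destruct (Req_dec (- eps ^ 2 * a ^ 2 + - eps ^ 2 * b ^ 2) 0) as [e|e].
    rewrite e; lra. left; apply exp_increasing; lra. }
  assert (Hxe : exp xi <= exp c).
  { destruct (Req_dec xi c) as [e|e]. rewrite e; lra. left; apply exp_increasing.
    pose proof (Rle_abs xi). lra. }
  assert (Hc0 : 0 <= c). { pose proof (Rabs_pos z). lra. }
  set (N := S r).
  assert (HN6 : 6 * c < INR N).
  { unfold N. rewrite S_INR. pose proof (Rmax_r (log2 (exp (2 * eps ^ 2 * D ^ 2) / delta) - 1)
                     (12 * eps ^ 2 * D ^ 2 - 1)). unfold c. lra. }
  assert (HlogN : log2 (exp c / delta) < INR N).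
  { unfold N. rewrite S_INR. pose proof (Rmax_l (log2 (exp (2 * eps ^ 2 * D ^ 2) / delta) - 1)
                     (12 * eps ^ 2 * D ^ 2 - 1)). unfold c. lra. }
  assert (Hf : 0 < INR (Factorial.fact N)) by apply INR_fact_lt_0.
  assert (H2N : exp c / delta < 2 ^ N).
  { rewrite <- Rpower_pow by lra. unfold Rpower.
    assert (Hl2 : 0 < ln 2) by (rewrite <- ln_1; apply ln_increasing; lra).
    unfold log2 in HlogN.
    assert (ln (exp c / delta) < INR N * ln 2).
    { apply (Rmult_lt_compat_r (ln 2)) in HlogN; auto.
      unfold Rdiv in HlogN. rewrite Rmult_assoc, Rinv_l in HlogN by lra. lra. }
    rewrite <- (exp_ln (exp c / delta)). apply exp_increasing; auto.
    apply Rdiv_lt_0_compat; auto. apply exp_pos. }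
  assert (HT : Rabs (z ^ N / INR (Factorial.fact N)) <= / 2 ^ N).
  { rewrite Rabs_div, Rabs_right with (r := INR (Factorial.fact N)) by lra.
    rewrite <- RPow_abs.
    pose proof (fact_bound c N Hc0 HN6) as H4.
    assert (Hp : 0 < 2 ^ N) by (apply pow_lt; lra).
    assert (H5 : Rabs z ^ N <= c ^ N) by (apply pow_incr; split; [apply Rabs_pos | auto]).
    rewrite Rpow_mult_distr in H4.
    apply (Rmult_le_reg_r (INR (Factorial.fact N) * 2^N)). nra.
    replace (Rabs z ^ N / INR (Factorial.fact N) * (INR (Factorial.fact N) * 2 ^ N)) with (Rabs z ^ N * 2 ^ N) by (field; lra).
    replace (/ 2 ^ N * (INR (Factorial.fact N) * 2 ^ N)) with (INR (Factorial.fact N)) by (field; lra).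
    apply (Rmult_le_compat_r (INR (Factorial.fact N))) in H4; [|lra].
    unfold Rdiv in H4. rewrite Rmult_assoc, Rinv_l, Rmult_1_r in H4 by lra. nra. }
  rewrite Rabs_mult, Rabs_right by (left; apply Rmult_lt_0_compat; [lra | apply exp_pos]).
  assert (0 < exp xi) by apply exp_pos.
  assert (Hp : 0 < 2 ^ N) by (apply pow_lt; lra).
  assert (exp c / 2 ^ N < delta).
  { apply (Rmult_lt_reg_r (2^N / delta)). apply Rdiv_lt_0_compat; lra.
    replace (exp c / 2 ^ N * (2 ^ N / delta)) with (exp c / delta) by (field; lra).
    replace (delta * (2 ^ N / delta)) with (2 ^ N) by (field; lra). lra. }
  assert (K * exp xi <= exp c) by nra.
  pose proof (Rabs_pos (z ^ N / INR (Factorial.fact N))).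
  unfold Rdiv in *. nra.
Qed.
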